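(* For $k\geq2$ and $d\geq3$, $R_{d,\dots,d}(W_d^{\otimes k})\leq 2^{k-1}kd$, where $W_d^{\otimes k}\in S^d\mathbb{C}^2\otimes\cdots\otimes S^d\mathbb{C}^2$ ($k$ factors).
   Context: Identify $S^d\mathbb{C}^2$ with binary forms of degree $d$ in a basis $\{x,y\}$; $W_d=x^{d-1}y$. The partially symmetric rank $R_{d_1,\dots,d_k}(T)$ is the minimal $r$ such that $T=\sum_{i=1}^r v_{i,1}^{\otimes d_1}\otimes\cdots\otimes v_{i,k}^{\otimes d_k}$ with $v_{i,j}\in\mathbb{C}^2$. *)

(* Defs.v *)
From mathcomp Require Import all_boot all_algebra.
From mathcomp Require Import complex Rstruct.
From Stdlib Require Import ClassicalEpsilon.
Set Implicit Arguments. Unset Strict Implicit. Unset Printing Implicit Defensive.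
Import GRing.Theory.
Local Open Scope ring_scope.

Definition C : fieldType := complex Rdefinitions.R.

(* An element of S^d C^2 (x) ... (x) S^d C^2 (k factors), viewed inside
   (C^2)^{(x) kd}: its coordinates in the basis {x = 0, y = 1} of C^2,
   indexed by idx j l = basis index in slot l of the j-th factor. *)
Definition ps_tensor (k d : nat) := ('I_k -> 'I_d -> 'I_2) -> C.

Definition ps_rank_one (k d : nat) (v : 'I_k -> 'I_2 -> C) : ps_tensor k d :=
  fun idx => \prod_(j < k) \prod_(l < d) v j (idx j l).

Definition ps_decomp (k d : nat) (T : ps_tensor k d) (r : nat) : Prop :=
  exists v : 'I_r -> 'I_k -> 'I_2 -> C,
    forall idx, T idx = \sum_(i < r) ps_rank_one (v i) idx.

Definition ps_decompb (k d : nat) (T : ps_tensor k d) (r : nat) : bool :=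
  if excluded_middle_informative (ps_decomp T r) then true else false.

Lemma ps_decompb_ex (k d : nat) (T : ps_tensor k d) :
  (exists r, ps_decomp T r) -> exists r, ps_decompb T r.
Proof.
move=> [r Hr]; exists r; rewrite /ps_decompb.
by case: excluded_middle_informative.
Qed.

Definition ps_rank (k d : nat) (T : ps_tensor k d) : nat :=
  match excluded_middle_informative (exists r, ps_decomp T r) with
  | left H => ex_minn (ps_decompb_ex H)
  | right _ => 0%N
  end.

(* W_d = x^{d-1} y in S^d C^2, as a symmetric tensor: the symmetrization
   (1/d) * sum over positions of x (x) ... (x) y (x) ... (x) x. *)
Definition W (d : nat) : ('I_d -> 'I_2) -> C :=
  fun s => if #|[set l | (s l : nat) == 1%N]| == 1%N then (d%:R)^-1 else 0.

Definition W_pow (k d : nat) : ps_tensor k d :=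
  fun idx => \prod_(j < k) W (idx j).
Arguments W_pow k d : clear implicits.

(* Main.v *)
Require Import Defs.
From mathcomp Require Import all_boot all_algebra all_field.
From mathcomp Require Import complex Rstruct ring zify cyclic.
Import GRing.Theory Num.Theory.
Local Open Scope ring_scope.
From Stdlib Require Import ClassicalEpsilon.
Lemma ps_rank_le k d (T : ps_tensor k d) r : ps_decomp T r -> (ps_rank T <= r)%N.
Proof.
move=> H; rewrite /ps_rank; case: excluded_middle_informative => [E|[]]; last by exists r.
case: ex_minnP => m _ Hm; apply: Hm; rewrite /ps_decompb.
by case: excluded_middle_informative.
Qed.

Lemma ps_decomp_fin k d (T : ps_tensor k d) (X : finType) (v : X -> 'I_k -> 'I_2 -> C) :
  (forall idx, T idx = \sum_(t : X) ps_rank_one (v t) idx) -> ps_decomp T #|X|.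
Proof.
move=> H; exists (fun i => v (enum_val i)) => idx; rewrite H.
rewrite (eq_bigl (fun t => t \in X)) //.
by rewrite (big_enum_val (A := mem X) (fun t => ps_rank_one (v t) idx)).
Qed.

Lemma prod_if_card n (P : pred 'I_n) (a : C) :
  \prod_(l < n) (if P l then a else 1) = a ^+ #|[set l | P l]|.
Proof. by rewrite -big_mkcond /= prodr_const cardsE. Qed.

Lemma prim_root_exists n : (n > 0)%N -> {z : C | n.-primitive_root z}.
Proof.
pose p : {poly C} := 'X^n - 1; have [r Dp] := closed_field_poly_normal p.
move=> n_gt0; apply/sigW; rewrite (monicP _) ?monicXnsubC // scale1r in Dp.
have rn1: all n.-unity_root r by apply/allP=> z; rewrite -root_prod_XsubC -Dp.
have sz_r: (n < (size r).+1)%N.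
  by rewrite -(size_prod_XsubC r id) -Dp size_XnsubC.
have [|z] := hasP (has_prim_root n_gt0 rn1 _ sz_r); last by exists z.
by rewrite -separable_prod_XsubC -Dp separable_Xn_sub_1 // pnatr_eq0 -lt0n.
Qed.
Section NatS.
Local Open Scope nat_scope.
Lemma nat_all1 k' (m : 'I_k'.+1 -> nat) :
  (forall j', odd (m (lift ord0 j'))) -> \sum_j m j = k'.+1 -> forall j, m j = 1.
Proof.
move=> Hodd; rewrite big_ord_recl => Hs.
have Hpos j' : m (lift ord0 j') = (m (lift ord0 j')).-1.+1.
  by move: (Hodd j'); case: (m (lift ord0 j')).
rewrite (eq_bigr (fun j' => (m (lift ord0 j')).-1 + 1)) in Hs; last first.
  by move=> j' _; rewrite addn1 -Hpos.
rewrite big_split /= sum1_card card_ord in Hs.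
set S := \sum_(i < k') (m (lift ord0 i)).-1 in Hs.
have Hle j' : (m (lift ord0 j')).-1 <= S.
  by rewrite /S (bigD1 j') //= leq_addr.
have H0 j' : (m (lift ord0 j')).-1 = 0.
  have := Hle j'; have := Hodd j'; rewrite Hpos /=.
  case: ((m (lift ord0 j')).-1) => [|[|n]] //= _ h; lia.
have HS : S = 0 by rewrite /S big1.
have Hm0 : m ord0 = 1 by lia.
move=> j; case: (unliftP ord0 j) => [j'|] ->; last by [].
by rewrite Hpos H0.
Qed.
End NatS.

Lemma prod_if_card1 n (s : 'I_n -> 'I_2) (a : C) :
  \prod_(l < n) (if (s l : nat) == 1%N then a else 1) = a ^+ #|[set l | (s l : nat) == 1%N]|.
Proof. exact: prod_if_card. Qed.

Section Constr.
Variables (k' d : nat) (w : C).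
Local Notation k := k'.+1.
Local Notation N := (k'.+1 * d)%N.
Hypothesis d_gt0 : (0 < d)%N.

Definition sgn (e : {ffun 'I_k' -> bool}) (j : 'I_k) : C :=
  match unlift ord0 j with Some j' => if e j' then -1 else 1 | None => 1 end.
Definition cc : C := ((N * 2 ^ k' * d ^ k)%:R)^-1.
Definition lam (i : 'I_N) e : C := d.-root (cc * w ^+ (i * (N - k)) * \prod_j sgn e j).
Definition vv (t : 'I_N * {ffun 'I_k' -> bool}) (j : 'I_k) (b : 'I_2) : C :=
  @GRing.mul C (if j == ord0 then lam t.1 t.2 else 1)
  (if (b : nat) == 1%N then sgn t.2 j * w ^+ t.1 else 1).

Definition mm (idx : 'I_k -> 'I_d -> 'I_2) (j : 'I_k) : nat :=
  #|[set l | (idx j l : nat) == 1%N]|.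

Lemma rank_one_vv t idx :
  ps_rank_one (vv t) idx =
  cc * (w ^+ (\sum_j mm idx j + N - k)) ^+ t.1 * \prod_j sgn t.2 j ^+ (mm idx j).+1.
Proof.
rewrite /ps_rank_one /vv.
have H : forall (f : 'I_k -> 'I_d -> C) (g : 'I_k -> C), \prod_(j < k) \prod_(l < d) (g j * f j l) = \prod_(j < k) (g j ^+ d * \prod_(l < d) f j l).
  move=> f g. by under eq_bigr => j _ do rewrite big_split /= prodr_const card_ord.
rewrite H; clear H.
have E j : \prod_(l<d) (if (idx j l : nat) == 1%N then sgn t.2 j * w ^+ t.1 else 1) = (sgn t.2 j * w^+t.1) ^+ mm idx j.
  exact: prod_if_card1.
rewrite (eq_bigr (fun j => (if j == ord0 then lam t.1 t.2 else 1) ^+ d * (sgn t.2 j * w ^+ t.1) ^+ mm idx j)); last by move=> j _; rewrite E.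
rewrite big_split /= big_ord_recl eqxx big1; last first.
  by move=> j _; rewrite eq_sym (negbTE (neq_lift _ _)) expr1n.
rewrite mulr1 rootCK //.
rewrite (eq_bigr (fun i => sgn t.2 i ^+ mm idx i * w ^+ (t.1 * mm idx i)) (F1 := fun i => (sgn t.2 i * w ^+ t.1) ^+ mm idx i)); last first.
  by move=> i _; rewrite exprMn -exprM.
rewrite big_split /= prodrXr -big_distrr /=.
rewrite (eq_bigr (fun j => sgn t.2 j * sgn t.2 j ^+ mm idx j) (F1 := fun j => sgn t.2 j ^+ (mm idx j).+1)); last first.
  by move=> j _; rewrite exprS.
rewrite big_split /= -exprM.
have -> : (\sum_j mm idx j + N - k)%N = (\sum_j mm idx j + (N - k))%N.
  by rewrite addnBA // leq_pmulr.
rewrite mulnDl exprD (mulnC _ t.1) (mulnC _ t.1).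
ring.
Qed.

Lemma sum_vv idx :
  \sum_(t : 'I_N * {ffun 'I_k' -> bool}) ps_rank_one (vv t) idx =
  cc * (\sum_(i < N) (w ^+ (\sum_j mm idx j + N - k)) ^+ i) *
  \prod_(j < k') (1 + (-1) ^+ (mm idx (lift ord0 j)).+1).
Proof.
rewrite (eq_bigr _ (fun t _ => rank_one_vv t idx)).
rewrite -(pair_bigA _ (fun (i : 'I_N) (e : {ffun 'I_k' -> bool}) => cc * w ^+ (\sum_j mm idx j + N - k) ^+ i * \prod_j sgn e j ^+ (mm idx j).+1)) /=.
have HQ : \prod_(j < k') (1 + (-1) ^+ (mm idx (lift ord0 j)).+1) =
   \sum_(e : {ffun 'I_k' -> bool}) \prod_j sgn e j ^+ (mm idx j).+1.
  rewrite (eq_bigr (fun j => \sum_(b : bool) (if b then -1 else 1) ^+ (mm idx (lift ord0 j)).+1)); last first.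
    by move=> j _; rewrite big_bool /= expr1n addrC.
  rewrite bigA_distr_bigA /=; apply: eq_bigr => e _.
  rewrite big_ord_recl /sgn unlift_none expr1n mul1r.
  by apply: eq_bigr => j _; rewrite liftK.
rewrite HQ -mulrA big_distrl /= mulr_sumr; apply: eq_bigr => i _.
by rewrite mulr_sumr mulr_sumr; apply: eq_bigr => e _; rewrite mulrA.
Qed.
End Constr.

Theorem corollary3p7 (k d : nat) :
  (2 <= k)%N -> (3 <= d)%N -> (ps_rank (W_pow k d) <= 2 ^ (k - 1) * k * d)%N.
Proof.
case: k => [|k'] // hk hd.
have d_gt0 : (0 < d)%N by lia.
have N_gt0 : (0 < k'.+1 * d)%N by lia.
have [w Hw] := prim_root_exists _ N_gt0.
apply: (leq_trans (@ps_rank_le _ _ _ _ (@ps_decomp_fin _ _ _ _ (vv k' d w) _))); last first.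
  rewrite card_prod card_ord card_ffun card_bool card_ord subn1 /=.
  by rewrite mulnC mulnA.
move=> idx; rewrite (@sum_vv k' d w d_gt0 idx) /=.
rewrite /W_pow /W.
rewrite (eq_bigr (fun j => if mm k' d idx j == 1%N then (d%:R : C)^-1 else 0)) //.
have hd0 : (d%:R : C) != 0 by rewrite pnatr_eq0 -lt0n.
have hk0 : (k'.+1%:R : C) != 0 by rewrite pnatr_eq0.
have h20 : (2%:R : C) != 0 by rewrite pnatr_eq0.
case: (boolP [forall j, mm k' d idx j == 1%N]) => Hall.
  have Hm j : mm k' d idx j = 1%N by apply/eqP; move/forallP: Hall.
  have L : \prod_(j < k'.+1) (if mm k' d idx j == 1%N then (d%:R : C)^-1 else 0) = (d%:R : C)^-1 ^+ k'.+1.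
    rewrite (eq_bigr (fun _ => (d%:R : C)^-1)); last by move=> j _; rewrite Hm.
    by rewrite prodr_const card_ord.
  have HM : (\sum_j mm k' d idx j = k'.+1)%N.
    by rewrite (eq_bigr (fun _ => 1%N)) ?sum1_card ?card_ord // => j _; rewrite Hm.
  have S : \sum_(i < k'.+1 * d) (w ^+ (\sum_j mm k' d idx j + k'.+1 * d - k'.+1)) ^+ i = (k'.+1 * d)%:R.
    rewrite HM addKn prim_expr_order //.
    rewrite (eq_bigr (fun _ => 1)); last by move=> i _; rewrite expr1n.
    by rewrite sumr_const card_ord.
  have Q : \prod_(j < k') (1 + (-1) ^+ (mm k' d idx (lift ord0 j)).+1) = (2%:R : C) ^+ k'.
    rewrite (eq_bigr (fun _ => 2%:R)); last by move=> j _; rewrite Hm expr2 mulN1r opprK.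
    by rewrite prodr_const card_ord.
  rewrite L S Q /cc !natrM !natrX exprVn.
  have hb : (2%:R : C) ^+ k' != 0 by rewrite expf_neq0.
  have hc : (d%:R : C) ^+ k'.+1 != 0 by rewrite expf_neq0.
  move: hb hc; set b := (2%:R : C) ^+ k'; set c := (d%:R : C) ^+ k'.+1 => hb hc.
  have ha : (k'.+1%:R * d%:R * b : C) != 0 by rewrite !mulf_neq0.
  by rewrite -mulrA invfM mulrAC mulVf // mul1r.
rewrite negb_forall in Hall; case/existsP: Hall => j Hj.
have -> : \prod_(j < k'.+1) (if mm k' d idx j == 1%N then (d%:R : C)^-1 else 0) = 0.
  by apply/eqP/prodf_eq0; exists j => //; rewrite (negbTE Hj).
have HMle : (\sum_j mm k' d idx j <= k'.+1 * d)%N.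
  rewrite -[X in (_ <= X * _)%N](card_ord k'.+1) -sum_nat_const.
  apply: leq_sum => i _; rewrite /mm -[X in (_ <= X)%N](card_ord d).
  exact: max_card.
case: (boolP (k'.+1 * d %| \sum_j mm k' d idx j + k'.+1 * d - k'.+1)%N) => Hdiv.
  have HM : (\sum_j mm k' d idx j = k'.+1)%N.
    move: Hdiv HMle; set M := (\sum_j mm k' d idx j)%N; set N := (k'.+1 * d)%N.
    have : (k'.+1 < N)%N by rewrite /N; nia.
    move=> h1 /dvdnP [q Hq] h2; case: q Hq => [|[|q]] Hq; nia.
  have : ~~ [forall j', odd (mm k' d idx (lift ord0 j'))].
    apply/negP => /forallP Ho; have := @nat_all1 k' (mm k' d idx) Ho HM j.
    by move/eqP: Hj.
  rewrite negb_forall => /existsP [j' Hj'].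
  have -> : \prod_(j < k') (1 + (-1) ^+ (mm k' d idx (lift ord0 j)).+1) = 0 :> C.
    apply/eqP/prodf_eq0; exists j' => //.
    by rewrite -signr_odd /= (negbTE Hj') expr1 addrN.
  by rewrite mulr0.
set x := w ^+ (\sum_j mm k' d idx j + k'.+1 * d - k'.+1).
have : x ^+ (k'.+1 * d) - 1 = 0.
  by rewrite /x -exprM mulnC exprM (prim_expr_order Hw) expr1n subrr.
rewrite subrX1 => /eqP; rewrite mulf_eq0 subr_eq0 => /orP [hx|/eqP ->].
  by rewrite /x -(prim_order_dvd Hw) (negbTE Hdiv) in hx.
by rewrite mulr0 mul0r.
Qed.
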